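(* Let $\mathcal{H}=(V,\mathcal{A})$ be a multi-head HyTN in which every node of $V$ is the tail of at least one hyperarc, and let $G_{\mathcal{H}}$ be its associated mean payoff game. If every node of $G_{\mathcal{H}}$ is a winning start position for Player 1, then $\mathcal{H}$ is consistent.
   Context: A multi-head HyTN is a pair $\mathcal{H}=(V,\mathcal{A})$, $V$ a finite node set, $\mathcal{A}$ a finite set of hyperarcs $A=(t_A,H_A,w_A)$ with tail $t_A\in V$, nonempty head set $H_A\subseteq V\setminus\{t_A\}$ and weights $w_A(v)\in\mathbb{R}$ for $v\in H_A$. A scheduling $s:V\to\mathbb{R}$ is feasible if $s(t_A)\ge\min_{v\in H_A}\{s(v)-w_A(v)\}$ for all $A\in\mathcal{A}$; $\mathcal{H}$ is consistent if a feasible scheduling exists. A mean payoff game (MPG) is a finite directed graph with real arc weights whose node set is partitioned into $V_0$ (nodes of Player 0) and $V_1$ (nodes of Player 1), where every node has at least one outgoing arc. A play from a start node $v_0$ proceeds in moves: when the pebble is at $v_{t-1}\in V_p$, Player $p$ chooses an arc $e_t$ leaving $v_{t-1}$ and the pebble moves to its head $v_t$. The play ends at the first $t$ such that $v_t=v_{t'}$ for some $t'<t$; Player 0 wins if $\frac{1}{t-t'}\sum_{i=t'+1}^{t}w(e_i)<0$, otherwise Player 1 wins. A strategy for Player $p$ maps each history ending in a node of $V_p$ to an outgoing arc of that node. A node $s$ is a winning start position for Player 1 if Player 1 has a strategy such that every play starting at $s$ in which Player 1 follows it is won by Player 1. The associated game $G_{\mathcal{H}}$ has $V_0=V$, $V_1=\mathcal{A}$,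 and arc set $\{(t_A,A,0)\mid A\in\mathcal{A}\}\cup\{(A,h,w_A(h))\mid A\in\mathcal{A},h\in H_A\}$ (an arc $(x,y,w)$ goes from $x$ to $y$ with weight $w$). *)

(* Defs.v *)
From HB Require Import structures.
From mathcomp Require Import all_boot all_order all_algebra.
Set Implicit Arguments. Unset Strict Implicit. Unset Printing Implicit Defensive.
Import Order.TTheory GRing.Theory Num.Theory.
Local Open Scope ring_scope.

(* Nodes N, arcs E (a finite type, so parallel arcs are allowed),      *)
(* src/dst of arcs, real weights w, owner v = false for Player 0,      *)
(* owner v = true for Player 1.                                        *)
(* A history/play from a start node s is the sequence of arcs moved.   *)
Section MPG.
Variables (R : realFieldType) (N E : finType) (src dst : E -> N) (w : E -> R)
  (owner : N -> bool).

Fixpoint is_walk (v : N) (es : seq E) : bool :=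
  match es with
  | [::] => true
  | e :: es' => (src e == v) && is_walk (dst e) es'
  end.

(* nodes v_0, ..., v_{t-1} of a sequence of t arcs starting at s *)
Definition play_nodes (s : N) (es : seq E) : seq N := belast s (map dst es).
Definition end_node (s : N) (es : seq E) : N := last s (map dst es).

(* a finished play: a walk from s which ends at the first t such that
   v_t = v_{t'} for some t' < t *)
Definition terminated_play (s : N) (es : seq E) : bool :=
  [&& is_walk s es, uniq (play_nodes s es) & end_node s es \in play_nodes s es].

Definition cycle_arcs (s : N) (es : seq E) : seq E :=
  drop (index (end_node s es) (play_nodes s es)) es.

Definition mean_weight (es : seq E) : R :=
  (\sum_(e <- es) w e) / (size es)%:R.

Definition player0_wins (s : N) (es : seq E) : Prop :=
  mean_weight (cycle_arcs s es) < 0.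

(* strategies for plays started at a fixed node s: histories are arc sequences *)
Definition strategy := seq E -> E.

Definition valid_strategy (p : bool) (s : N) (sigma : strategy) : Prop :=
  forall h : seq E, is_walk s h -> owner (end_node s h) = p ->
    src (sigma h) = end_node s h.

Fixpoint follows (p : bool) (sigma : strategy) (v : N) (hist : seq E)
  (es : seq E) : bool :=
  match es with
  | [::] => true
  | e :: es' => ((owner v == p) ==> (e == sigma hist))
                && follows p sigma (dst e) (rcons hist e) es'
  end.

Definition winning_start1 (s : N) : Prop :=
  exists sigma : strategy, valid_strategy true s sigma /\
    forall es : seq E, terminated_play s es -> follows true sigma s [::] es ->
      ~ player0_wins s es.

End MPG.

(* Multi-head HyTNs: node type V, hyperarcs indexed by the finite type *)
(* I, tail, head set and weights w_A(v) (only relevant for v in H_A).  *)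
Section HyTN.
Variables (R : realFieldType) (V I : finType) (tail : I -> V)
  (head : I -> {set V}) (wt : I -> V -> R).

Definition feasible (s : V -> R) : Prop :=
  forall A : I, exists2 v, v \in head A & s v - wt A v <= s (tail A).

Definition consistent : Prop := exists s : V -> R, feasible s.

Definition GNode := (V + I)%type.
Definition GArc := (I + {p : I * V | p.2 \in head p.1})%type.

Definition g_src (e : GArc) : GNode :=
  match e with inl A => inl (tail A) | inr p => inr (sval p).1 end.
Definition g_dst (e : GArc) : GNode :=
  match e with inl A => inr A | inr p => inl (sval p).2 end.
Definition g_w (e : GArc) : R :=
  match e with inl _ => 0 | inr p => wt (sval p).1 (sval p).2 end.
Definition g_owner (x : GNode) : bool :=
  match x with inl _ => false | inr _ => true end.

Definition GH_winning_start1 (x : GNode) : Prop :=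
  @winning_start1 R (V + I)%type (I + {p : I * V | p.2 \in head p.1})%type g_src g_dst g_w g_owner x.

End HyTN.

(* Main.v *)
Require Import Defs.
From HB Require Import structures.
From mathcomp Require Import all_boot all_order all_algebra.
From mathcomp Require Import lra.
Import Order.TTheory GRing.Theory Num.Theory.
Local Open Scope ring_scope.

Module Helpers.
Set Implicit Arguments. Unset Strict Implicit.

Section Gen.
Variables (N E : finType) (src dst : E -> N) (owner : N -> bool).

Lemma is_walk_cat v s1 s2 : is_walk src dst v (s1 ++ s2) =
  is_walk src dst v s1 && is_walk src dst (last v (map dst s1)) s2.
Proof. by elim: s1 v => [|e s IH] v //=; rewrite IH andbA. Qed.

Lemma follows_cat p sg v hist s1 s2 : follows dst owner p sg v hist (s1 ++ s2) =
  follows dst owner p sg v hist s1 &&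
  follows dst owner p sg (last v (map dst s1)) (hist ++ s1) s2.
Proof.
elim: s1 v hist => [|e s IH] v hist /=; first by rewrite cats0.
by rewrite IH cat_rcons andbA.
Qed.

Lemma last_take_nodes (x : N) (h : seq E) i : (i <= size h)%N ->
  last x (map dst (take i h)) = nth x (x :: map dst h) i.
Proof.
elim: h x i => [|e h IH] x [|i] //= Hi.
rewrite IH //; apply: set_nth_default; by rewrite /= size_map ltnS.
Qed.
End Gen.

Section Game.
Variables (R : realFieldType) (V I : finType) (tail : I -> V)
  (head : I -> {set V}) (wt : I -> V -> R).

Local Notation N := (GNode V I).
Local Notation E := (GArc head).
Local Notation src := (g_src tail (head:=head)).
Local Notation dst := (@g_dst V I head).
Local Notation owner := (@g_owner V I).
Local Notation w := (g_w (head:=head) wt).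

Definition W (h : seq E) : R := \sum_(e <- h) w e.

Definition good (sg : strategy E) (x0 : V) (h : seq E) : bool :=
  [&& is_walk src dst (inl x0) h, uniq (inl x0 :: map dst h)
    & follows dst owner true sg (inl x0) [::] h].

Lemma W_cat h1 h2 : W (h1 ++ h2) = W h1 + W h2.
Proof. by rewrite /W big_cat. Qed.

Lemma good_take sg x0 h i : good sg x0 h -> good sg x0 (take i h).
Proof.
case/and3P=> Hw Hu Hf; apply/and3P; split.
- by move: Hw; rewrite -{1}(cat_take_drop i h) is_walk_cat => /andP[].
- by rewrite map_take; exact: (take_uniq i.+1 Hu).
- by move: Hf; rewrite -{1}(cat_take_drop i h) follows_cat => /andP[].
Qed.


Lemma mean_nonneg (es : seq E) : ~ (mean_weight w es < 0) -> 0 <= W es.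
Proof.
rewrite /mean_weight -/(W es) => H.
have {}H : 0 <= W es / (size es)%:R by rewrite leNgt; apply/negP.
case: es H => [|e es] H; first by rewrite /W big_nil.
have Hn : 0 < (size (e :: es))%:R :> R by rewrite ltr0n.
have -> : W (e :: es) = W (e :: es) / (size (e :: es))%:R * (size (e :: es))%:R.
  by rewrite divfK // gt_eqF.
exact: mulr_ge0 H (ltW Hn).
Qed.

Lemma key sg x0 (Hv : valid_strategy src dst owner true (inl x0) sg)
  (Hw : forall es, terminated_play src dst (inl x0) es ->
     follows dst owner true sg (inl x0) [::] es -> ~ player0_wins dst w (inl x0) es)
  h A : good sg x0 h -> last (inl x0) (map dst h) = inl (tail A) ->
  exists g h', [/\ g \in head A, good sg x0 h', last (inl x0) (map dst h') = inl g
                 & W h' <= W h + wt A g].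
Proof.
move=> Hg Hl; have /and3P[Hwk Hu Hf] := Hg.
set X : N := inl x0.
set nodes := X :: map dst h.
have Hw1 : is_walk src dst X (rcons h (inl A)).
  by rewrite -cats1 is_walk_cat Hwk /= Hl eqxx.
have Hf1 : follows dst owner true sg X [::] (rcons h (inl A)).
  by rewrite -cats1 follows_cat Hf /= Hl.
have Hpn1 : play_nodes dst X (rcons h (inl A)) = nodes.
  by rewrite /play_nodes map_rcons belast_rcons.
have He1 : end_node dst X (rcons h (inl A)) = inr A.
  by rewrite /end_node map_rcons last_rcons.
have Hlast : nth X nodes (size h) = inl (tail A).
  by rewrite -last_take_nodes // take_size.
case: (boolP (inr A \in nodes)) => HA.
- set j := index (inr A) nodes.
  have Hj : (j < size h)%N.
    have : (j < size nodes)%N by rewrite index_mem.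
    rewrite /= size_map ltnS leq_eqVlt => /orP[/eqP Hjs|//].
    by move: (nth_index X HA); rewrite -/j Hjs Hlast.
  have Ht : terminated_play src dst X (rcons h (inl A)).
    by rewrite /terminated_play Hw1 Hpn1 He1 Hu HA.
  have := mean_nonneg (Hw _ Ht Hf1).
  rewrite /cycle_arcs Hpn1 He1 -/j drop_rcons ?(ltnW Hj) // -cats1 W_cat.
  rewrite (drop_nth (inl A) Hj).
  set e := nth (inl A) h j.
  have Hse : src e = inr A.
    move: Hwk; rewrite -(cat_take_drop j h) is_walk_cat (drop_nth (inl A) Hj) -/e.
    move=> /andP[_] /= /andP[/eqP -> _].
    by rewrite last_take_nodes ?(ltnW Hj) // nth_index.
  have [p Hp HpA] : exists2 p : {p : I * V | p.2 \in head p.1}, e = inr p & (sval p).1 = A.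
    by move: Hse; case: e => [A'|p] //= [<-]; exists p.
  move=> Hc.
  exists (sval p).2, (take j.+1 h); split.
  + by rewrite -HpA; exact: (svalP p).
  + exact: good_take.
  + by rewrite last_take_nodes // /= (nth_map (inl A)) // -/e Hp.
  + have := W_cat (take j.+1 h) (drop j.+1 h); rewrite cat_take_drop => HWh.
    move: Hc; rewrite /W big_cons big_cons big_nil Hp /= HpA -/(W _) => Hc.
    rewrite -/(W h) HWh; change (W (take j.+1 h) <= W (take j.+1 h) + W (drop j.+1 h) + wt A (sval p).2); lra.
- set h1 := rcons h (inl A).
  have [p Hp HpA] : exists2 p : {p : I * V | p.2 \in head p.1}, sg h1 = inr p & (sval p).1 = A.
    have := Hv h1 Hw1; rewrite He1 => /(_ erefl).
    by case: (sg h1) => [A'|p] //= [<-]; exists p.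
  set g := (sval p).2.
  have Hgh : g \in head A by rewrite -HpA; exact: (svalP p).
  set h2 := rcons h1 (sg h1).
  have Hw2 : is_walk src dst X h2.
    by rewrite /h2 -cats1 is_walk_cat Hw1 /= Hp /= /h1 map_rcons last_rcons HpA eqxx.
  have Hf2 : follows dst owner true sg X [::] h2.
    by rewrite /h2 -cats1 follows_cat Hf1 /= /h1 map_rcons last_rcons /= eqxx.
  have Hl2 : last X (map dst h2) = inl g by rewrite /h2 map_rcons last_rcons Hp.
  have HW2 : W h2 = W h + wt A g.
    rewrite /h2 Hp /h1 -!cats1 !W_cat /W !big_cons !big_nil /= HpA -/(W h) -/g.
    by rewrite !addr0.
  case: (boolP (inl g \in nodes)) => Hgn.
  + have Hpn2 : play_nodes dst X h2 = rcons nodes (inr A).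
      by rewrite /play_nodes /h2 map_rcons belast_rcons /h1 map_rcons.
    have Ht : terminated_play src dst X h2.
      by rewrite /terminated_play Hw2 Hpn2 /end_node Hl2 rcons_uniq HA Hu mem_rcons in_cons Hgn orbT.
    have := mean_nonneg (Hw _ Ht Hf2).
    rewrite /cycle_arcs Hpn2 /end_node Hl2 -cats1 index_cat Hgn.
    set i := index (inl g) nodes.
    have Hi : (i <= size h)%N.
      by rewrite -ltnS; have := index_mem (inl g) nodes; rewrite Hgn /= size_map.
    rewrite /h2 Hp /h1 drop_rcons ?size_rcons ?(leqW Hi) // drop_rcons // -!cats1 !W_cat.
    rewrite /W !big_cons !big_nil /= HpA -/g -!/(W _) => Hc.
    exists g, (take i h); split => //.
    * exact: good_take.
    * by rewrite last_take_nodes // nth_index.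
    * have := W_cat (take i h) (drop i h); rewrite cat_take_drop => HWh.
      rewrite HWh; change (W (take i h) <= W (take i h) + W (drop i h) + wt A g); lra.
  + exists g, h2; split => //; last by rewrite HW2.
    apply/and3P; split => //.
    rewrite /h2 Hp /h1 !map_rcons -!rcons_cons !rcons_uniq Hu HA /=.
    by rewrite andbT -rcons_cons mem_rcons in_cons; apply/norP; split.
Qed.

End Game.

Fixpoint seqs_upto (T : finType) (n : nat) : seq (seq T) :=
  if n is n'.+1 then [::] :: [seq e :: s | e <- enum T, s <- seqs_upto T n']
  else [:: [::]].

Lemma mem_seqs_upto (T : finType) n (s : seq T) : (size s <= n)%N -> s \in seqs_upto T n.
Proof.
elim: n s => [|n IH] [|e s] //= Hs.
rewrite in_cons /=; apply: (allpairs_f (fun e s => e :: s)); first by rewrite mem_enum.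
exact: IH.
Qed.

Lemma bigmin_seq_le (R : realFieldType) (T : eqType) (r : seq T) (P : pred T)
  (F : T -> R) x0 x : x \in r -> P x -> \big[Order.min/x0]_(i <- r | P i) F i <= F x.
Proof.
elim: r => [|a r IH] //; rewrite in_cons big_cons => /orP[/eqP -> | xr] Px.
  by rewrite Px; set m := \big[_/_]_(j <- r | _) _; case: (lerP (F a) m) => // /ltW.
case: (P a); last exact: IH.
set m := \big[_/_]_(j <- r | _) _; case: (lerP (F a) m) => H; last exact: IH.
apply: le_trans H _; exact: IH.
Qed.

Lemma bigmin_attain (R : realFieldType) (T : eqType) (r : seq T) (P : pred T)
  (F : T -> R) x0 : \big[Order.min/x0]_(i <- r | P i) F i = x0 \/
  exists2 x, (x \in r) && P x & \big[Order.min/x0]_(i <- r | P i) F i = F x.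
Proof.
elim: r => [|a r IH]; first by left; rewrite big_nil.
rewrite big_cons; set m := \big[_/_]_(j <- r | _) _ in IH *; case Pa: (P a).
  case: (lerP (F a) m) => H.
    by right; exists a; rewrite ?in_cons ?eqxx ?Pa.
  case: IH => [-> | [x Hx ->]]; [by left | right; exists x => //].
  by case/andP: Hx => Hx Px; rewrite in_cons Hx orbT.
case: IH => [-> | [x Hx ->]]; [by left | right; exists x => //].
by case/andP: Hx => Hx Px; rewrite in_cons Hx orbT.
Qed.


End Helpers.
Import Helpers.

Theorem mainTheorem9 (R : realFieldType) (V I : finType) (tail : I -> V)
  (head : I -> {set V}) (wt : I -> V -> R)
  (head_ne : forall A : I, head A != set0)
  (tail_notin_head : forall A : I, tail A \notin head A)
  (every_node_tail : forall v : V, exists A : I, tail A = v)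
  (all_win1 : forall x : GNode V I, GH_winning_start1 tail head wt x) :
  consistent tail head wt.
Proof.
have [sig Hsig] := fin_all_exists (fun x0 : V => all_win1 (inl x0)).
pose cands := [seq (x, h) | x <- enum V, h <- seqs_upto (GArc head) #|{: (V + I)%type}| ].
pose P (t : V) (p : V * seq (GArc head)) :=
  good tail (sig p.1) p.1 p.2 && (last (inl p.1) (map (@g_dst V I head) p.2) == inl t).
pose s (t : V) := \big[Order.min/0]_(p <- cands | P t p) W wt p.2.
have Hle : forall t x0 h, P t (x0, h) -> s t <= W wt h.
  move=> t x0 h Hp; apply: (@bigmin_seq_le _ _ _ _ _ _ (x0, h)) => //.
  apply: (allpairs_f (fun x h => (x, h))); first by rewrite mem_enum.
  apply: mem_seqs_upto.
  case/andP: Hp => /and3P[_ Hu _] _.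
  have := max_card (mem (inl x0 :: map (@g_dst V I head) h)).
  by rewrite (card_uniqP Hu) /= size_map => /ltnW.
have Hatt : forall t, exists x0 h, P t (x0, h) /\ s t = W wt h.
  move=> t; case: (@bigmin_attain _ _ cands (P t) (fun p => W wt p.2) 0) => [Hm | [[x0 h] Hx Hm]].
    exists t, [::]; split; last by rewrite /s Hm /W big_nil.
    by rewrite /P /good /= eqxx.
  by exists x0, h; case/andP: Hx; rewrite /s Hm.
exists s => A.
have [x0 [h [Hp Hs]]] := Hatt (tail A).
case/andP: Hp => Hg /eqP Hl.
have [Hv Hw] := Hsig x0.
have [g [h' [Hgh Hg' Hl' HW]]] := key Hv Hw Hg Hl.
exists g => //.
have : s g <= W wt h' by apply: (Hle g x0 h'); rewrite /P Hg' /= Hl' eqxx.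
rewrite Hs in HW *; lra.
Qed.
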